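(* An exceptional graph has no cycle whose length is divisible by $3$.
   Context: All graphs are finite and simple. Let $r$ be a degree-$2$ vertex of a graph $G$. $G$ is an exceptional graph with root $r$ if there is a sequence $(G_0,x_0,y_0),\ldots,(G_n,x_n,y_n)$, $n\ge 0$, with $G_0=K_{2,3}$, $G_n=G$, such that for each $i$ the vertices $r,x_i,y_i$ are distinct degree-$2$ vertices of $G_i$, and for each $i<n$: (1) if $x_iy_i\notin E(G_i)$, $G_{i+1}$ is obtained from $G_i$ by adding a new path of length $3$ joining $x_i$ and $y_i$; (2) if $x_iy_i\in E(G_i)$, $G_{i+1}$ is obtained from $G_i$ either by adding a new vertex $v$ with $N_{G_{i+1}}(v)=N_{G_i}(w)$ for some $w\in\{x_i,y_i\}$, or by adding a new $4$-cycle $abcda$ and the edges $ax_i,cy_i$. A graph is exceptional if it is an exceptional graph with some root. *)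

(* Defs.v *)
From mathcomp Require Import all_boot.
Set Implicit Arguments. Unset Strict Implicit. Unset Printing Implicit Defensive.

(* A finite simple graph is a symmetric irreflexive relation e on a finType T.
   For V : {set T}, G[V] denotes the induced subgraph on V. *)

Section Exceptional.
Variables (T : finType) (e : rel T).

Definition nbr (V : {set T}) (v : T) : {set T} := [set u in V | e v u].
Definition deg (V : {set T}) (v : T) : nat := #|nbr V v|.

Definition isK23 (V : {set T}) : Prop :=
  exists A B : {set T},
    [/\ #|A| = 2, #|B| = 3, [disjoint A & B], V = A :|: B &
        forall u v, u \in V -> v \in V ->
          e u v = ((u \in A) && (v \in B)) || ((u \in B) && (v \in A))].

Definition good_triple (V : {set T}) (r x y : T) : Prop :=
  [/\ [/\ r \in V, x \in V & y \in V],
      [/\ r != x, r != y & x != y] &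
      [/\ deg V r = 2, deg V x = 2 & deg V y = 2]].

(* G[V'] is obtained from G[V] by one construction step at (x, y).
   Since every added edge is incident to a new vertex, each G_i is the
   induced subgraph of the final graph on its vertex set. *)
Definition step (V V' : {set T}) (x y : T) : Prop :=
  if ~~ e x y then
    exists a b : T,
      [/\ [/\ a \notin V, b \notin V & a != b],
          V' = V :|: [set a; b],
          nbr V' a = [set x; b] & nbr V' b = [set a; y]]
  else
    (exists v w : T,
      [/\ v \notin V, w \in [set x; y], V' = v |: V & nbr V' v = nbr V w])
    \/
    (exists a b c d : T,
      [/\ [/\ a \notin V, b \notin V, c \notin V & d \notin V],
          uniq [:: a; b; c; d],
          V' = V :|: [set a; b; c; d] &
          [/\ nbr V' a = [set b; d; x], nbr V' b = [set a; c],
              nbr V' c = [set b; d; y] & nbr V' d = [set a; c]]]).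

Definition exceptional_root (r : T) : Prop :=
  exists (n : nat) (Vs : nat -> {set T}) (xs ys : nat -> T),
    [/\ isK23 (Vs 0%N), Vs n = setT,
        (forall i, i <= n -> good_triple (Vs i) r (xs i) (ys i)) &
        (forall i, i < n -> step (Vs i) (Vs i.+1) (xs i) (ys i))].

Definition exceptional : Prop := exists r : T, exceptional_root r.

End Exceptional.

(* Main.v *)
Require Import Defs.
From mathcomp Require Import all_boot.
Set Implicit Arguments. Unset Strict Implicit. Unset Printing Implicit Defensive.
Section Cyc.
Variables (T : finType) (e : rel T).
Hypothesis e_sym : symmetric e.
Hypothesis e_irr : irreflexive e.

Lemma cycle_cons a s : cycle e (a :: s) = path e a s && e (last a s) a.
Proof. by rewrite /= rcons_path. Qed.

Lemma cyc_rot a p : cycle e p -> a \in p ->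
  exists q, perm_eq p (a :: q) /\ cycle e (a :: q).
Proof.
move=> Hc Ha; case: (rot_to Ha) => i q Hr; exists q.
by rewrite -Hr rot_cycle perm_sym perm_rot perm_refl.
Qed.

Lemma cyc_rev a q : cycle e (a :: q) -> cycle e (a :: rev q).
Proof.
move=> H; rewrite -(rot_cycle 1) rot1_cons -rev_cons rev_cycle.
by rewrite (@eq_cycle _ _ e) // => x y; rewrite e_sym.
Qed.

Lemma last_in (z : T) q : q != [::] -> last z q \in q.
Proof. by case/lastP: q => // q t _; rewrite last_rcons mem_rcons mem_head. Qed.

Lemma cyc_two a p : uniq p -> cycle e p -> 3 <= size p -> a \in p ->
  exists z t, [/\ z \in p, t \in p, z != t, e a z & e a t].
Proof.
move=> Hu Hc Hs Ha; case: (cyc_rot Hc Ha) => q [Hp Hc'].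
have Hm := perm_mem Hp; have Hz := perm_size Hp; rewrite (perm_uniq Hp) in Hu.
case: q Hp Hc' Hm Hz Hu => [|z q1] Hp Hc' Hm Hz Hu; first by rewrite Hz in Hs.
case: q1 Hp Hc' Hm Hz Hu => [|z1 q1] Hp Hc' Hm Hz Hu; first by rewrite Hz in Hs.
move: Hc'; rewrite cycle_cons => /andP[Hpa Hl].
exists z, (last z (z1 :: q1)); split.
- by rewrite Hm !inE eqxx orbT.
- by rewrite Hm inE mem_last orbT.
- apply/negP => /eqP Heq.
  have : last z (z1 :: q1) \in z1 :: q1 by apply: last_in.
  rewrite -Heq; move: Hu => /= /andP[_ /andP[+ _]]; rewrite inE.
  by move=> /negP H1 H2; apply: H1.
- by move: Hpa => /= /andP[].
- by rewrite e_sym.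
Qed.

Lemma cyc_at a b c p : uniq p -> cycle e p -> 3 <= size p -> a \in p ->
  (forall z, z \in p -> e a z -> z = b \/ z = c) ->
  exists q, perm_eq p (a :: b :: q) /\ cycle e (a :: b :: q).
Proof.
move=> Hu Hc Hs Ha Hn; case: (cyc_rot Hc Ha) => q [Hp Hc'].
have Hm := perm_mem Hp; have Hz := perm_size Hp; rewrite (perm_uniq Hp) in Hu.
case: q Hp Hc' Hm Hz Hu => [|z q1] Hp Hc' Hm Hz Hu; first by rewrite Hz in Hs.
have Hq1 : q1 != [::] by apply/eqP => E; rewrite Hz E in Hs.
move: (Hc'); rewrite cycle_cons => /andP[Hpa Hl].
have Hza : e a z by move: Hpa => /= /andP[].
have zp : z \in p by rewrite Hm !inE eqxx orbT.
have tp : last z q1 \in p by rewrite Hm inE mem_last orbT.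
have Hzt : z != last z q1.
  apply/negP => /eqP Heq; have := last_in z Hq1; rewrite -Heq.
  by move: Hu => /= /andP[_ /andP[/negP + _]].
case: (Hn z zp Hza) => Ez.
  by exists q1; rewrite -Ez.
case: (Hn _ tp); first by rewrite e_sym.
- move=> Et; clear Hm Hz Hu tp Hl Hpa; move: Hq1 Hzt Hc' Hp Et; case/lastP: q1 => // q2 t _.
  rewrite last_rcons => Hzt Hc' Hp Et.
  exists (rcons (rev q2) z).
    have E : t :: rcons (rev q2) z = rev (z :: rcons q2 t) by rewrite rev_cons rev_rcons.
  split; first by rewrite (perm_trans Hp) // perm_cons -Et E perm_sym perm_rev.
  by rewrite -Et E; apply: cyc_rev.
- by move=> Et; rewrite Et -Ez eqxx in Hzt.
Qed.


Lemma uniq_cat_disj (l r : seq T) x : uniq (l ++ r) -> x \in l -> x \in r -> False.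
Proof. by rewrite cat_uniq => /and3P[_ /hasPn H _] xl xr; move: (H x xr); rewrite /= xl. Qed.

Lemma cyc_twin v w s1 s2 p : uniq p -> cycle e p -> 3 <= size p -> v \in p -> w \in p ->
  v != w -> w != s1 -> w != s2 ->
  (forall z, z \in p -> e v z -> z = s1 \/ z = s2) ->
  (forall z, z \in p -> e w z -> z = s1 \/ z = s2) -> size p = 4.
Proof.
move=> Hu Hc Hs vp wp vw ws1 ws2 Hv Hw.
case: (cyc_at Hu Hc Hs vp Hv) => q [Hp Hc'].
have Hm := perm_mem Hp; rewrite (perm_size Hp); rewrite (perm_uniq Hp) in Hu.
have wq : w \in q by move: wp; rewrite Hm !inE (negbTE ws1) eq_sym (negbTE vw).
have Hq : q != [::] by apply/eqP => E; rewrite E in wq.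
move: (Hc'); rewrite cycle_cons => /andP[Hpa Hl].
have Hlq := last_in s1 Hq.
have Hls2 : last s1 q = s2.
  case: (Hv (last s1 q)); first by rewrite Hm !inE Hlq !orbT.
    by rewrite e_sym.
  - by move=> E; move: Hu; rewrite /= -E Hlq /= andbF.
  - by [].
clear Hl Hc' Hp; move: wq Hq Hpa Hu Hlq Hls2 Hm.
case/lastP: q => // q' t; rewrite last_rcons => wq _ Hpa Hu _ Et Hm; subst t.
have wq' : w \in q' by move: wq; rewrite mem_rcons inE (negbTE ws2).
case: (splitPr wq') Hpa Hu Hm => l m Hpa Hu Hm.
move: Hpa; rewrite /= rcons_cat cat_path /= => /andP[_] /andP[Hlw' /andP[Hlw Hpm]].
have El : l = [::].
  apply/eqP; apply: contraT => Hl; have Hll := last_in s1 Hl.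
  case: (Hw (last s1 l)).
  - by rewrite Hm !inE mem_rcons !inE mem_cat Hll !orbT.
  - by rewrite e_sym.
  - move=> E; move: Hu; rewrite /= -E !mem_rcons !inE !mem_cat Hll !orbT /=.
    by rewrite andbF.
  - move=> E; move: Hu => /= /andP[_ /andP[_]]; rewrite rcons_cat.
    move/uniq_cat_disj => H; suff : False by [].
    by apply: (H s2); [rewrite -E | rewrite mem_rcons !inE eqxx].
subst l.
have Em : m = [::].
  case: m Hpm Hu Hm {wq wq'} => // z m Hpm Hu Hm.
  move: Hpm => /= /andP[Hwz _].
  case: (Hw z); first by rewrite Hm !inE mem_rcons !inE eqxx !orbT.
  - by [].
  - move=> E; move: Hu; rewrite /= -E !inE mem_rcons !inE eqxx !orbT /=.
    by rewrite andbF.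
  - move=> E; move: Hu => /= /and3P[_ _] /andP[_] /andP[+ _].
    by rewrite -E mem_rcons !inE eqxx.
by subst m.
Qed.

End Cyc.

Section G.
Variables (T : finType) (e : rel T).
Hypothesis e_sym : symmetric e.
Hypothesis e_irr : irreflexive e.
Variable r : T.
Implicit Types (V : {set T}) (u v x y z w : T) (p q : seq T).

Definition Dset (V : {set T}) := [set u in V | (u != r) && (deg e V u == 2)].
Definition Cyc (V : {set T}) := forall p, uniq p -> {subset p <= V} -> 3 <= size p ->
  cycle e p -> size p %% 3 != 0.
Definition Pth (V : {set T}) := forall u q, uniq (u :: q) -> {subset u :: q <= V} ->
  path e u q -> u \in Dset V -> last u q \in Dset V -> u != last u q ->
  ~~ e u (last u q) -> size q %% 3 != 0.
Definition MinD (V : {set T}) := forall u, u \in V -> 1 < deg e V u.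
Definition Inv V := [/\ Cyc V, Pth V, #|Dset V| <= 2 & MinD V].

Lemma inC x {y} s : x \in s -> x \in y :: s.
Proof. by rewrite inE => ->; rewrite orbT. Qed.

Lemma nbrE V u z : (z \in nbr e V u) = (z \in V) && e u z.
Proof. by rewrite inE. Qed.

Lemma nbr_sub V (V' : {set T}) u : V \subset V' -> nbr e V u \subset nbr e V' u.
Proof.
move=> H; apply/subsetP => z; rewrite !nbrE => /andP[zV ->].
by rewrite (subsetP H z zV).
Qed.

Lemma deg_mono V (V' : {set T}) u : V \subset V' -> deg e V u <= deg e V' u.
Proof. by move=> H; apply: subset_leq_card; apply: nbr_sub. Qed.

Lemma nbr_same V (V' : {set T}) u : V \subset V' ->
  (forall z, z \in V' -> z \notin V -> ~~ e u z) -> nbr e V' u = nbr e V u.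
Proof.
move=> H Hn; apply/setP => z; rewrite !nbrE.
case: (boolP (z \in V)) => zV; first by rewrite (subsetP H z zV).
case: (boolP (z \in V')) => zV' //=.
by apply/negbTE/Hn.
Qed.

Lemma deg_grow V (V' : {set T}) u z : V \subset V' -> z \in V' -> z \notin V -> e u z ->
  (deg e V u).+1 <= deg e V' u.
Proof.
move=> H zV' zV euz; apply: proper_card; apply/properP; split.
  by apply: nbr_sub.
by exists z; rewrite !nbrE ?zV' ?euz // (negbTE zV).
Qed.

Lemma nbr_edge V u z (S : {set T}) : nbr e V u = S -> z \in S -> e u z.
Proof. by move=> <-; rewrite nbrE => /andP[]. Qed.

Lemma nbr_in V u z : z \in V -> e u z -> z \in nbr e V u.
Proof. by move=> zV euz; rewrite nbrE zV euz. Qed.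

Lemma card_le2 V u v : Dset V \subset [set u; v] -> #|Dset V| <= 2.
Proof.
move=> H; apply: (leq_trans (subset_leq_card H)).
by rewrite cards2; case: (u != v).
Qed.

Lemma D_sub2 V x y : #|Dset V| <= 2 -> x \in Dset V -> y \in Dset V -> x != y ->
  forall u, u \in Dset V -> u = x \/ u = y.
Proof.
move=> Hc xD yD xy u uD.
have Hs : [set x; y] \subset Dset V by apply/subsetP => z /set2P[] ->.
have : [set x; y] == Dset V by rewrite eqEcard Hs cards2 xy.
move/eqP => E; move: uD; rewrite -E !inE => /orP[] /eqP ->; by [left|right].
Qed.

Lemma Pth_adj V u v : Dset V \subset [set u; v] -> e u v -> Pth V.
Proof.
move=> HD euv u0 q _ _ _ uD lD ne nadj.
suff : e u0 (last u0 q) by rewrite (negbTE nadj).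
move: (subsetP HD _ uD) (subsetP HD _ lD) ne.
by move=> /set2P[] -> /set2P[] ->; rewrite ?eqxx // e_sym.
Qed.

Lemma Pth_twin V u v : Dset V \subset [set u; v] -> nbr e V u = nbr e V v ->
  Cyc V -> Pth V.
Proof.
move=> HD Hn HC u0 q Hu Hs Hp uD lD ne nadj.
have Hn0 : nbr e V u0 = nbr e V (last u0 q).
  move: (subsetP HD _ uD) (subsetP HD _ lD) ne.
  by move=> /set2P[] -> /set2P[] ->; rewrite ?eqxx.
move: Hu Hs Hp Hn0 ne nadj {uD lD}; case/lastP: q => [|q0 l].
  by rewrite /= eqxx.
rewrite last_rcons => Hu Hs Hp Hn0 ne nadj.
case: q0 Hu Hs Hp => [|z m] Hu Hs Hp.
  by move: Hp nadj => /= /andP[->].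
case: m Hu Hs Hp => [|z1 m] Hu Hs Hp; first by [].
have E : size (rcons [:: z, z1 & m] l) = size [:: u0, z, z1 & m].
  by rewrite size_rcons.
rewrite E; apply: HC.
- by move: Hu; rewrite -rcons_cons rcons_uniq => /andP[].
- by move=> w wp; apply: Hs; rewrite -rcons_cons mem_rcons inE wp orbT.
- by [].
- rewrite cycle_cons; move: Hp; rewrite rcons_path => /andP[-> Hl] /=.
  have lV : last z1 m \in V.
    by apply: Hs; rewrite -rcons_cons mem_rcons; do 3 apply: inC; apply: mem_last.
  have : last z1 m \in nbr e V l by rewrite nbrE lV e_sym.
  by rewrite -Hn0 nbrE e_sym => /andP[].
Qed.

End G.

Section Op.
Variables (T : finType) (e : rel T).
Hypothesis e_sym : symmetric e.
Hypothesis e_irr : irreflexive e.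
Variable r : T.
Implicit Types (V : {set T}) (u v x y z w : T) (p q : seq T).

Lemma neq_in_notin V u v : u \in V -> v \notin V -> u != v.
Proof. by move=> uV vV; apply/eqP => E; move: vV; rewrite -E uV. Qed.

Lemma modS3 n : n.+3 %% 3 = n %% 3.
Proof. by rewrite -addn3 modnDr. Qed.

Lemma op1_inv V (V' : {set T}) x y a b : Inv e r V -> good_triple e V r x y -> ~~ e x y ->
  a \notin V -> b \notin V -> a != b -> V' = V :|: [set a; b] ->
  nbr e V' a = [set x; b] -> nbr e V' b = [set a; y] -> Inv e r V'.
Proof.
case=> HC HP HN HM [[rV xV yV] [rx ry xy] [dr dx dy]] nxy aV bV ab EV' Na Nb.
have sub : V \subset V' by rewrite EV' subsetUl.
have aV' : a \in V' by rewrite EV' !inE eqxx orbT.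
have bV' : b \in V' by rewrite EV' !inE eqxx !orbT.
have inV' : forall z, z \in V' -> z \notin V -> z = a \/ z = b.
  by move=> z; rewrite EV' => /setUP[->//|/set2P].
have xD : x \in Dset e r V by rewrite inE xV eq_sym rx dx.
have yD : y \in Dset e r V by rewrite inE yV eq_sym ry dy.
have HDV := D_sub2 HN xD yD xy.
have ea : forall z, z \in V' -> e a z -> z = x \/ z = b.
  by move=> z zV' eaz; apply/set2P; rewrite -Na nbrE zV' eaz.
have eb : forall z, z \in V' -> e b z -> z = a \/ z = y.
  by move=> z zV' eaz; apply/set2P; rewrite -Nb nbrE zV' eaz.
have xa : e x a by rewrite e_sym (nbr_edge Na) // set21.
have yb : e y b by rewrite e_sym (nbr_edge Nb) // set22.
have eab : e a b by rewrite (nbr_edge Na) // set22.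
have HD : Dset e r V' \subset [set a; b].
  apply/subsetP => u; rewrite inE => /andP[uV' /andP[ur du]].
  case: (boolP (u \in V)) => uV; last first.
    by case: (inV' u uV' uV) => ->; rewrite !inE eqxx ?orbT.
  case: (eqVneq u x) => [Ex|nx].
    by subst u; have := deg_grow sub aV' aV xa; rewrite dx (eqP du).
  case: (eqVneq u y) => [Ey|ny].
    by subst u; have := deg_grow sub bV' bV yb; rewrite dy (eqP du).
  have Hs : nbr e V' u = nbr e V u.
    apply: nbr_same sub _ => z zV' zV; case: (inV' z zV' zV) => ->; apply/negP => H.
    - case: (ea u uV'); first by rewrite e_sym.
      + by move=> E; rewrite E eqxx in nx.
      + by move=> E; move: bV; rewrite -E uV.
    - case: (eb u uV'); first by rewrite e_sym.
      + by move=> E; move: aV; rewrite -E uV.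
      + by move=> E; rewrite E eqxx in ny.
  have : u \in Dset e r V by rewrite inE uV ur /deg -Hs du.
  by case/HDV => E; [rewrite E eqxx in nx | rewrite E eqxx in ny].
have HCV' : Cyc e V'.
  move=> p Hu Hs H3 Hc.
  case: (boolP (a \in p)) => ap.
  - case: (cyc_at e_sym Hu Hc H3 ap (b:=b) (c:=x)) => [z zp eaz|q [Hp Hc']].
      by case: (ea z (Hs z zp) eaz) => ->; [right|left].
    have Hm := perm_mem Hp; rewrite (perm_size Hp); rewrite (perm_uniq Hp) in Hu.
    have Hs' : {subset a :: b :: q <= V'} by move=> w; rewrite -Hm; apply: Hs.
    case: q Hp Hc' Hm Hu Hs' => [|z m] Hp Hc' Hm Hu Hs'.
      by rewrite (perm_size Hp) in H3.
    move: (Hc'); rewrite cycle_cons => /andP[/= /and3P[_ ebz Hpm] Hl].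
    have Ez : z = y.
      case: (eb z) => //; first by apply: Hs'; do 2 apply: inC; apply: mem_head.
      by move=> E; move: Hu => /andP[+ _]; rewrite E !inE eqxx !orbT.
    subst z.
    have El : last y m = x.
      case: (ea (last y m)).
      - by apply: Hs'; do 2 apply: inC; apply: mem_last.
      - by rewrite e_sym.
      - by [].
      - by move=> E; move: Hu => /= /andP[_ /andP[+ _]]; rewrite -E mem_last.
    have : size m %% 3 != 0.
      apply: (HP y m).
      - by move: Hu => /andP[_] /andP[_].
      - move=> w wm; have := Hs' w (inC (inC wm)); rewrite EV' => /setUP[//|/set2P[] E].
        + by move: Hu => /andP[+ _]; rewrite -E (inC wm).
        + by move: Hu => /andP[_ /andP[+ _]]; rewrite -E wm.
      - by [].
      - by [].
      - by rewrite El.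
      - by rewrite El eq_sym.
      - by rewrite El e_sym.
    by rewrite /= modS3.
  - case: (boolP (b \in p)) => bp.
    + case: (cyc_two e_sym Hu Hc H3 bp) => z [t [zp tp zt ebz ebt]].
      case: (eb z (Hs z zp) ebz) => Ez; first by move: ap; rewrite -Ez zp.
      case: (eb t (Hs t tp) ebt) => Et; first by move: ap; rewrite -Et tp.
      by rewrite Ez Et eqxx in zt.
    + apply: HC => // w wp; have := Hs w wp; rewrite EV' => /setUP[//|/set2P[] E].
      * by move: wp; rewrite E (negbTE ap).
      * by move: wp; rewrite E (negbTE bp).
split => //.
- exact: (Pth_adj e_sym HD eab).
- exact: card_le2 HD.
- move=> u uV'; case: (boolP (u \in V)) => uV.
    exact: leq_trans (HM u uV) (deg_mono _ _ sub).
  case: (inV' u uV' uV) => ->; rewrite /deg ?Na ?Nb cards2.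
  + by rewrite (neq_in_notin xV bV).
  + by rewrite eq_sym (neq_in_notin yV aV).
Qed.


Lemma op2a_inv V (V' : {set T}) x y v w : Inv e r V -> good_triple e V r x y -> e x y ->
  v \notin V -> w \in [set x; y] -> V' = v |: V -> nbr e V' v = nbr e V w -> Inv e r V'.
Proof.
case=> HC HP HN HM [[rV xV yV] [rx ry xy] [dr dx dy]] exy vV wxy EV' Nv.
have sub : V \subset V' by rewrite EV' subsetU1.
have vV' : v \in V' by rewrite EV' setU11.
have inV' : forall z, z \in V' -> z \notin V -> z = v.
  by move=> z; rewrite EV' => /setU1P[->|->].
have wV : w \in V by case/set2P: wxy => ->.
have dw : deg e V w = 2 by case/set2P: wxy => ->.
have [s1 [s2 [s12 Ns]]] : exists s1 s2, s1 != s2 /\ nbr e V w = [set s1; s2].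
  by apply/cards2P; rewrite -/(deg e V w) dw.
have ev : forall u, u \in V -> e u v = e w u.
  move=> u uV; rewrite e_sym; apply/idP/idP => H.
  - have : u \in nbr e V' v by rewrite nbrE (subsetP sub _ uV) H.
    by rewrite Nv nbrE => /andP[].
  - have : u \in nbr e V' v by rewrite Nv nbrE uV H.
    by rewrite nbrE => /andP[].
have Nw : nbr e V' w = nbr e V w.
  apply: nbr_same sub _ => z zV' zV; rewrite (inV' z zV' zV) ev //.
  by rewrite e_irr.
have xD : x \in Dset e r V by rewrite inE xV eq_sym rx dx.
have yD : y \in Dset e r V by rewrite inE yV eq_sym ry dy.
have HDV := D_sub2 HN xD yD xy.
have HD : Dset e r V' \subset [set v; w].
  apply/subsetP => u; rewrite inE => /andP[uV' /andP[ur du]].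
  case: (boolP (u \in V)) => uV; last by rewrite (inV' u uV' uV) set21.
  case: (eqVneq u w) => [->|uw]; first by rewrite set22.
  case: (boolP (e w u)) => ewu.
  - have := deg_grow sub vV' vV (_ : e u v); rewrite ev // ewu => /(_ isT).
    have := HM u uV; rewrite (eqP du) => h1 h2; move: (leq_trans h1 h2); by rewrite ltnn.
  - have Hs : nbr e V' u = nbr e V u.
      by apply: nbr_same sub _ => z zV' zV; rewrite (inV' z zV' zV) ev.
    have : u \in Dset e r V by rewrite inE uV ur /deg -Hs du.
    case/HDV => E; subst u; move: ewu uw; case/set2P: wxy => ->;
      rewrite ?eqxx ?exy //; by rewrite e_sym exy.
have HCV' : Cyc e V'.
  move=> p Hu Hs H3 Hc.
  case: (boolP (v \in p)) => vp; last first.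
    apply: HC => // z zp; have := Hs z zp; rewrite EV' => /setU1P[E|//].
    by move: vp; rewrite -E zp.
  have ns : forall z, z \in p -> e v z -> z = s1 \/ z = s2.
    by move=> z zp evz; apply/set2P; rewrite -Ns -Nv nbrE (Hs z zp) evz.
  have nsw : forall z, z \in p -> e w z -> z = s1 \/ z = s2.
    by move=> z zp evz; apply/set2P; rewrite -Ns -Nw nbrE (Hs z zp) evz.
  have ws1 : w != s1.
    apply/eqP => E; have : s1 \in nbr e V w by rewrite Ns set21.
    by rewrite nbrE -E e_irr andbF.
  have ws2 : w != s2.
    apply/eqP => E; have : s2 \in nbr e V w by rewrite Ns set22.
    by rewrite nbrE -E e_irr andbF.
  case: (boolP (w \in p)) => wp.
    by rewrite (cyc_twin e_sym Hu Hc H3 vp wp (_ : v != w) ws1 ws2 ns nsw) // eq_sym (neq_in_notin wV vV).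
  case: (cyc_at e_sym Hu Hc H3 vp ns) => q [Hp Hc'].
  have Hm := perm_mem Hp; rewrite (perm_size Hp); rewrite (perm_uniq Hp) in Hu.
  have -> : size [:: v, s1 & q] = size [:: w, s1 & q] by [].
  apply: HC.
  - apply/andP; split; last by case/andP: Hu.
    by apply: contra wp => H; rewrite Hm inC.
  - move=> z; rewrite inE => /orP[/eqP -> //|zq].
    have := Hs z; rewrite Hm (inC zq) => /(_ isT); rewrite EV' => /setU1P[E|//].
    by move: Hu => /andP[+ _]; rewrite -E zq.
  - by move: H3; rewrite (perm_size Hp).
  - move: Hc'; rewrite !cycle_cons => /andP[/= /andP[_ Hq] Hl].
    rewrite /= Hq andbT; apply/andP; split; first by rewrite (nbr_edge Ns) // set21.
    have lV' : last s1 q \in V' by apply: Hs; rewrite Hm inC // mem_last.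
    have : last s1 q \in nbr e V' v by rewrite nbrE lV' e_sym.
    by rewrite Nv nbrE e_sym => /andP[].
split => //.
- by apply: (Pth_twin e_sym HD _ HCV'); rewrite Nv Nw.
- exact: card_le2 HD.
- move=> u uV'; case: (boolP (u \in V)) => uV.
    exact: leq_trans (HM u uV) (deg_mono _ _ sub).
  by rewrite (inV' u uV' uV) /deg Nv -/(deg e V w) dw.
Qed.


Lemma card3 b d x : uniq [:: b; d; x] -> #|[set b; d; x]| = 3.
Proof.
rewrite /= !inE negb_or => /andP[/andP[bd bx] /andP[dx _]].
by rewrite setUC cardsU1 cards2 bd !inE negb_or eq_sym bx eq_sym dx.
Qed.

Lemma op2b_case V (V' : {set T}) x y a b c d p : Cyc e V -> x \in V -> y \in V ->
  x != y -> e x y -> a \notin V -> b \notin V -> c \notin V -> d \notin V ->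
  c != b -> c != d ->
  (forall z, z \in V' -> z \notin V -> [|| z == a, z == b, z == c | z == d]) ->
  nbr e V' a = [set b; d; x] -> nbr e V' b = [set a; c] -> nbr e V' c = [set b; d; y] ->
  uniq p -> {subset p <= V'} -> 3 <= size p -> cycle e p -> b \in p -> d \notin p ->
  size p %% 3 != 0.
Proof.
move=> HC xV yV xy exy aV bV cV dV cb cd inV' Na Nb Nc Hu Hs H3 Hc bp dp.
have eb : forall z, z \in V' -> e b z -> z = a \/ z = c.
  by move=> z zV' ez; apply/set2P; rewrite -Nb nbrE zV' ez.
have ea : forall z, z \in V' -> e a z -> [|| z == b, z == d | z == x].
  move=> z zV' ez; have : z \in nbr e V' a by rewrite nbrE zV' ez.
  by rewrite Na !inE -!orbA.
have ec : forall z, z \in V' -> e c z -> [|| z == b, z == d | z == y].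
  move=> z zV' ez; have : z \in nbr e V' c by rewrite nbrE zV' ez.
  by rewrite Nc !inE -!orbA.
case: (cyc_at e_sym Hu Hc H3 bp (fun z zp => eb z (Hs z zp))) => q [Hp Hc'].
have Hm := perm_mem Hp; rewrite (perm_size Hp); rewrite (perm_uniq Hp) in Hu.
have Hs' : {subset b :: a :: q <= V'} by move=> w; rewrite -Hm; apply: Hs.
have dq : d \notin b :: a :: q by rewrite -Hm.
have Hq : q != [::] by apply/eqP => E; move: H3; rewrite (perm_size Hp) E.
have El : last a q = c.
  move: (Hc'); rewrite cycle_cons => /andP[_] Hl.
  case: (eb (last a q)); first by apply: Hs'; rewrite inC // inC // last_in.
    by rewrite e_sym.
  - by move=> E; move: Hu; rewrite cons_uniq => /andP[_]; rewrite cons_uniq -{1}E last_in.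
  - by [].
clear Hm Hp Hs Hc H3.
move: Hu Hs' dq Hq El Hc'; case/lastP: q => // q' c'; rewrite last_rcons => Hu Hs' dq _ E Hc'.
subst c'.
move: Hc'; rewrite cycle_cons => /andP[/= /andP[_ Hpq] _].
case: q' Hu Hs' dq Hpq => [|z m] Hu Hs' dq Hpq.
  move: Hpq => /= /andP[eac _].
  have := ea c (Hs' c (inC (inC (mem_head _ _)))) eac.
  by rewrite (negbTE cb) (negbTE cd) eq_sym (negbTE (neq_in_notin xV cV)).
move: Hpq; rewrite rcons_path => /andP[/= /andP[eaz Hpm] Hlc].
move: Hu; rewrite cons_uniq => /andP[Hb]; rewrite cons_uniq => /andP[Ha].
rewrite rcons_uniq => /andP[Hcm Hzm].
have zin : forall w, w \in z :: m -> w \in [:: b, a & rcons (z :: m) c].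
  by move=> w wm; rewrite inC // inC // mem_rcons inC.
have Ez : z = x.
  move: (ea z (Hs' z (zin z (mem_head _ _))) eaz) => /or3P[/eqP E|/eqP E|/eqP //].
  - by move: Hb; rewrite -E inC // mem_rcons inC // mem_head.
  - by move: dq; rewrite -E zin // mem_head.
subst z.
have El : last x m = y.
  have lm := mem_last x m.
  move: (ec (last x m) (Hs' _ (zin _ lm))); rewrite e_sym => /(_ Hlc) /or3P[/eqP E|/eqP E|/eqP //].
  - by move: Hb; rewrite -E inC // mem_rcons inC.
  - by move: dq; rewrite -E zin.
have HV : {subset x :: m <= V}.
  move=> w wm; apply: contraT => wV; move: (inV' w (Hs' w (zin w wm)) wV).
  case/or4P => /eqP E.
  - by move: Ha; rewrite -E mem_rcons inC.
  - by move: Hb; rewrite -E inC // mem_rcons inC.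
  - by move: Hcm; rewrite -E wm.
  - by move: dq; rewrite -E zin.
case: m Hzm Hpm El HV {Hb Ha Hcm Hlc zin Hs' dq} => [|z1 m] Hzm Hpm El HV.
  by rewrite /= in El; rewrite El eqxx in xy.
case: m Hzm Hpm El HV => [|z2 m] Hzm Hpm El HV; first by [].
have := HC [:: x, z1, z2 & m] Hzm HV isT.
rewrite cycle_cons Hpm El e_sym exy => /(_ isT).
by rewrite /= size_rcons modS3.
Qed.


Lemma op2b_inv V (V' : {set T}) x y a b c d : Inv e r V -> good_triple e V r x y -> e x y ->
  a \notin V -> b \notin V -> c \notin V -> d \notin V -> uniq [:: a; b; c; d] ->
  V' = V :|: [set a; b; c; d] ->
  nbr e V' a = [set b; d; x] -> nbr e V' b = [set a; c] ->
  nbr e V' c = [set b; d; y] -> nbr e V' d = [set a; c] -> Inv e r V'.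
Proof.
case=> HC HP HN HM [[rV xV yV] [rx ry xy] [dr dx dy]] exy aV bV cV dV U4 EV' Na Nb Nc Nd.
move: (U4); rewrite /= !inE !negb_or => /andP[/and3P[ab ac ad] /andP[/andP[bc bd] /andP[cd _]]].
have sub : V \subset V' by rewrite EV' subsetUl.
have inV' : forall z, z \in V' -> z \notin V -> [|| z == a, z == b, z == c | z == d].
  by move=> z; rewrite EV' => /setUP[->//|]; rewrite !inE -!orbA.
have aV' : a \in V' by rewrite EV' !inE eqxx !orbT.
have bV' : b \in V' by rewrite EV' !inE eqxx !orbT.
have cV' : c \in V' by rewrite EV' !inE eqxx !orbT.
have dV' : d \in V' by rewrite EV' !inE eqxx !orbT.
have xD : x \in Dset e r V by rewrite inE xV eq_sym rx dx.
have yD : y \in Dset e r V by rewrite inE yV eq_sym ry dy.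
have HDV := D_sub2 HN xD yD xy.
have da : deg e V' a = 3.
  rewrite /deg Na card3 //= !inE negb_or bd eq_sym (neq_in_notin xV bV).
  by rewrite eq_sym (neq_in_notin xV dV).
have dc : deg e V' c = 3.
  rewrite /deg Nc card3 //= !inE negb_or bd eq_sym (neq_in_notin yV bV).
  by rewrite eq_sym (neq_in_notin yV dV).
have db : deg e V' b = 2 by rewrite /deg Nb cards2 ac.
have dd : deg e V' d = 2 by rewrite /deg Nd cards2 ac.
have HD : Dset e r V' \subset [set b; d].
  apply/subsetP => u; rewrite inE => /andP[uV' /andP[ur du]].
  case: (boolP (u \in V)) => uV; last first.
    case/or4P: (inV' u uV' uV) => /eqP E; subst u; rewrite ?set21 ?set22 //.
    + by rewrite da in du.
    + by rewrite dc in du.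
  case: (eqVneq u x) => [Ex|nx].
    have xa : e x a by rewrite e_sym (nbr_edge Na) // !inE eqxx !orbT.
    by subst u; have := deg_grow sub aV' aV xa; rewrite dx (eqP du).
  case: (eqVneq u y) => [Ey|ny].
    have yc : e y c by rewrite e_sym (nbr_edge Nc) // !inE eqxx !orbT.
    by subst u; have := deg_grow sub cV' cV yc; rewrite dy (eqP du).
  have Hs : nbr e V' u = nbr e V u.
    apply: nbr_same sub _ => z zV' zV; apply/negP => euz.
    have uz : u \in nbr e V' z by rewrite nbrE uV' e_sym.
    case/or4P: (inV' z zV' zV) => /eqP E; subst z; move: uz.
    - rewrite Na !inE (negbTE nx) (negbTE (neq_in_notin uV bV)).
      by rewrite (negbTE (neq_in_notin uV dV)).
    - by rewrite Nb !inE (negbTE (neq_in_notin uV aV)) (negbTE (neq_in_notin uV cV)).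
    - rewrite Nc !inE (negbTE ny) (negbTE (neq_in_notin uV bV)).
      by rewrite (negbTE (neq_in_notin uV dV)).
    - by rewrite Nd !inE (negbTE (neq_in_notin uV aV)) (negbTE (neq_in_notin uV cV)).
  have : u \in Dset e r V by rewrite inE uV ur /deg -Hs du.
  by case/HDV => E; [rewrite E eqxx in nx | rewrite E eqxx in ny].
have HCV' : Cyc e V'.
  move=> p Hu Hs H3 Hc.
  have nac : forall z, z \in p -> e b z -> z = a \/ z = c.
    by move=> z zp ez; apply/set2P; rewrite -Nb nbrE (Hs z zp) ez.
  have nac' : forall z, z \in p -> e d z -> z = a \/ z = c.
    by move=> z zp ez; apply/set2P; rewrite -Nd nbrE (Hs z zp) ez.
  case: (boolP (b \in p)) => bp; case: (boolP (d \in p)) => dp.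
  - by rewrite (cyc_twin e_sym Hu Hc H3 bp dp bd _ _ nac nac') // eq_sym.
  - apply: (op2b_case HC xV yV xy exy aV bV cV dV _ cd inV' Na Nb Nc) => //.
    by rewrite eq_sym.
  - apply: (op2b_case (V' := V') (b := d) (d := b) HC xV yV xy exy aV dV cV bV _ _ _ _ Nd) => //.
    + by rewrite eq_sym.
    + by move=> z zV' zV; move: (inV' z zV' zV); case: (z == b); case: (z == d); rewrite ?orbT.
    + rewrite Na; apply/setP => z; rewrite !inE.
      by case: (z == b); case: (z == d).
    + rewrite Nc; apply/setP => z; rewrite !inE.
      by case: (z == b); case: (z == d).
  - case: (boolP (a \in p)) => ap.
      case: (cyc_two e_sym Hu Hc H3 ap) => z [t [zp tp zt ez et]].
      have : z \in nbr e V' a by rewrite nbrE (Hs z zp) ez.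
      have : t \in nbr e V' a by rewrite nbrE (Hs t tp) et.
      rewrite Na !inE -!orbA => /or3P[/eqP E|/eqP E|/eqP Et]; first by rewrite -E tp in bp.
        by rewrite -E tp in dp.
      move=> /or3P[/eqP E|/eqP E|/eqP Ez]; first by rewrite -E zp in bp.
        by rewrite -E zp in dp.
      by rewrite Ez Et eqxx in zt.
    case: (boolP (c \in p)) => cp.
      case: (cyc_two e_sym Hu Hc H3 cp) => z [t [zp tp zt ez et]].
      have : z \in nbr e V' c by rewrite nbrE (Hs z zp) ez.
      have : t \in nbr e V' c by rewrite nbrE (Hs t tp) et.
      rewrite Nc !inE -!orbA => /or3P[/eqP E|/eqP E|/eqP Et]; first by rewrite -E tp in bp.
        by rewrite -E tp in dp.
      move=> /or3P[/eqP E|/eqP E|/eqP Ez]; first by rewrite -E zp in bp.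
        by rewrite -E zp in dp.
      by rewrite Ez Et eqxx in zt.
    apply: HC => // z zp; apply: contraT => zV.
    case/or4P: (inV' z (Hs z zp) zV) => /eqP E; move: zp; rewrite E.
    + by rewrite (negbTE ap).
    + by rewrite (negbTE bp).
    + by rewrite (negbTE cp).
    + by rewrite (negbTE dp).
split => //.
- by apply: (Pth_twin e_sym HD _ HCV'); rewrite Nb Nd.
- exact: card_le2 HD.
- move=> u uV'; case: (boolP (u \in V)) => uV.
    exact: leq_trans (HM u uV) (deg_mono _ _ sub).
  by case/or4P: (inV' u uV' uV) => /eqP ->; rewrite ?da ?db ?dc ?dd.
Qed.

End Op.

Section Base.
Variables (T : finType) (e : rel T).
Hypothesis e_sym : symmetric e.
Hypothesis e_irr : irreflexive e.
Variable r : T.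
Implicit Types (V : {set T}) (u v x y z w : T) (p q : seq T).

Lemma K23_inv V : isK23 e V -> r \in V -> deg e V r = 2 -> Inv e r V.
Proof.
case=> A [B [cA cB dAB EV He]] rV dr.
have inAB : forall u, u \in V -> (u \in B) = ~~ (u \in A).
  move=> u; rewrite EV => /setUP[uA|uB].
    by rewrite uA (disjointFr dAB uA).
  by rewrite uB; rewrite disjoint_sym in dAB; rewrite (disjointFr dAB uB).
have AV : {subset A <= V} by move=> u uA; rewrite EV inE uA.
have BV : {subset B <= V} by move=> u uB; rewrite EV inE uB orbT.
have nA : forall u, u \in A -> nbr e V u = B.
  move=> u uA; apply/setP => z; rewrite nbrE.
  case: (boolP (z \in V)) => zV /=; last by apply/esym/negP => /BV; rewrite (negbTE zV).
  by rewrite (He u z (AV u uA) zV) (inAB u (AV u uA)) uA /= orbF.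
have nB : forall u, u \in B -> nbr e V u = A.
  move=> u uB; apply/setP => z; rewrite nbrE.
  case: (boolP (z \in V)) => zV /=; last by apply/esym/negP => /AV; rewrite (negbTE zV).
  have nuA : (u \in A) = false by apply/negbTE; rewrite -inAB ?BV.
  by rewrite (He u z (BV u uB) zV) nuA uB.
have eAB : forall u z, u \in V -> z \in V -> e u z -> (z \in A) = ~~ (u \in A).
  move=> u z uV zV; rewrite He // (inAB u uV) (inAB z zV).
  by case: (u \in A); case: (z \in A).
have par : forall q u, u \in V -> {subset q <= V} -> path e u q ->
    (last u q \in A) = (u \in A) (+) odd (size q).
  elim => [|z q IH] u uV qV /=; first by rewrite addbF.
  move/andP => [euz Hp].
  have zV : z \in V by apply: qV; rewrite mem_head.
  rewrite (IH z zV) //; last by move=> w wq; apply: qV; rewrite inC.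
  by rewrite (eAB u z uV zV euz); case: (u \in A); case: (odd (size q)).
have cV : #|V| = 5.
  by rewrite EV cardsU (disjoint_setI0 dAB) cards0 cA cB.
have szV : forall s, uniq s -> {subset s <= V} -> size s <= 5.
  move=> s us sV; rewrite -cV -(card_uniqP us); apply: subset_leq_card.
  by apply/subsetP.
have dAu : forall u, u \in A -> deg e V u = 3 by move=> u uA; rewrite /deg nA.
have dBu : forall u, u \in B -> deg e V u = 2 by move=> u uB; rewrite /deg nB.
have DB : forall u, u \in Dset e r V -> u \in B.
  move=> u; rewrite inE => /and3P[uV _ du]; rewrite (inAB u uV).
  by apply/negP => uA; rewrite dAu in du.
have rB : r \in B by rewrite (inAB r rV); apply/negP => rA; rewrite dAu in dr.
split.
- case=> [|u q] Hu Hs H3 Hc //.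
  move: Hc; rewrite cycle_cons => /andP[Hp Hl].
  have uV : u \in V by apply: Hs; rewrite mem_head.
  have qV : {subset q <= V} by move=> w wq; apply: Hs; rewrite inC.
  have lV : last u q \in V by apply: Hs; rewrite mem_last.
  have := par q u uV qV Hp; rewrite (eAB _ _ lV uV Hl).
  have := szV _ Hu Hs; move: H3 => /=.
  by case: (last u q \in A); case: (size q) => [|[|[|[|[|n]]]]].
- move=> u q Hu Hs Hp uD lD ne _.
  have uV : u \in V by apply: Hs; rewrite mem_head.
  have qV : {subset q <= V} by move=> w wq; apply: Hs; rewrite inC.
  have := par q u uV qV Hp; rewrite -(negbK (_ \in A)) -(negbK (u \in A)).
  rewrite -!inAB ?DB // ?(Hs _ (mem_last _ _)) //.
  have := szV _ Hu Hs; move: ne => /=.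
  case: q {Hu Hs Hp uD lD qV} => [|z q] /=; first by rewrite eqxx.
  case: (size q) => [|[|[|[|n]]]] //=.
- apply: leq_trans (subset_leq_card (_ : Dset e r V \subset B :\ r)) _.
    apply/subsetP => u uD; rewrite !inE DB // andbT.
    by move: uD; rewrite inE => /and3P[].
  by move: cB; rewrite (cardsD1 r B) rB add1n => -[->].
- move=> u uV; case: (boolP (u \in A)) => uA; first by rewrite dAu.
  by rewrite dBu // inAB // uA.
Qed.

End Base.

Unset Implicit Arguments.
Theorem lemma3p3 (T : finType) (e : rel T)
    (e_sym : symmetric e) (e_irr : irreflexive e) :
  exceptional e ->
  forall p : seq T, uniq p -> 3 <= size p -> cycle e p -> ~~ (3 %| size p).
Proof.
move=> [r [n [Vs [xs [ys [H0 Hn Hg Hs]]]]]] p Hu H3 Hc.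
have Hi : forall i, i <= n -> Inv e r (Vs i).
  elim => [_|i IH Hi].
    case: (Hg 0 isT) => [[rV _ _] _ [dr _ _]]; exact: K23_inv.
  have Hi' : i <= n by apply: ltnW.
  move: (Hs i Hi); rewrite /step; case: ifP => Hxy.
    move=> [a [b [[aV bV ab] EV' Na Nb]]].
    exact: (op1_inv e_sym (IH Hi') (Hg i Hi') Hxy aV bV ab EV' Na Nb).
  have exy : e (xs i) (ys i) by move/negbFE: Hxy.
  case => [[v [w [vV wxy EV' Nv]]] | [a [b [c [d [[aV bV cV dV] U EV' [Na Nb Nc Nd]]]]]]].
    exact: (op2a_inv e_sym e_irr (IH Hi') (Hg i Hi') exy vV wxy EV' Nv).
  exact: (op2b_inv e_sym (IH Hi') (Hg i Hi') exy aV bV cV dV U EV' Na Nb Nc Nd).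
case: (Hi n (leqnn n)) => HC _ _ _.
by rewrite /dvdn; apply: HC => // z _; rewrite Hn inE.
Qed.
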